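(* Assume that the ALS parameter sequence $(\mathbf p_k)_{k\in\mathbb N}$ is bounded. Then $$\max_{1\le\mu\le L}\big\|\nabla_\mu F(\mathbf p_{k,\mu-1})\big\|\xrightarrow[k\to\infty]{}0,$$ where for $\mathbf q=(q_1,\dots,q_L)\in P$, $\nabla_\mu F(\mathbf q)\in P_\mu$ denotes the gradient of $x\mapsto F(q_1,\dots,q_{\mu-1},x,q_{\mu+1},\dots,q_L)$ at $x=q_\mu$.
   Context: Let $\mathcal V=\bigotimes_{\nu=1}^d\mathbb R^{m_\nu}\cong\mathbb R^N$ with the Euclidean inner product. Let $A\in\mathbb R^{N\times N}$ be symmetric positive definite, $b\in\mathcal V\setminus\{0\}$, $f(v)=\frac{1}{\|b\|^2}(\frac12\langle Av,v\rangle-\langle b,v\rangle)$. Let $L\ge d$, $P_1,\dots,P_L$ finite-dimensional real inner product spaces, $P=P_1\times\dots\times P_L$ with product norm, $U:P\to\mathcal V$ multilinear, $F=f\circ U$. For $\mathbf p\in P$, $W_{\mu,\mathbf p^{[\mu]}}:P_\mu\to\mathcal V$ is $q\mapsto U(p_1,\dots,p_{\mu-1},q,p_{\mu+1},\dots,p_L)$; $X^T$ transpose, $X^+$ pseudoinverse. ALS: choose $\mathbf p_1=(p_1^1,\dots,p_L^1)\in P$; for $k=1,2,\dots$ and $\mu=1,\dots,L$ in order, $W_{k,\mu}:=W_{\mu,(p_1^{k+1},\dots,p_{\mu-1}^{k+1},p_{\mu+1}^k,\dots,p_L^k)}$ and $p_\mu^{k+1}:=(W_{k,\mu}^TAW_{k,\mu})^+W_{k,\mu}^Tb$.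 Put $\mathbf p_k=(p_1^k,\dots,p_L^k)$ and, for $\mu\in\{0,\dots,L\}$, $\mathbf p_{k,\mu}=(p_1^{k+1},\dots,p_\mu^{k+1},p_{\mu+1}^k,\dots,p_L^k)$. *)

(* Defs.v *)
From HB Require Import structures.
From mathcomp Require Import all_boot all_order all_algebra.
From mathcomp Require Import all_classical all_reals all_analysis.
Set Implicit Arguments. Unset Strict Implicit. Unset Printing Implicit Defensive.
Import Order.TTheory GRing.Theory Num.Theory.
Import numFieldNormedType.Exports.
Local Open Scope classical_set_scope.
Local Open Scope ring_scope.

Section Defs.
Variable R : realType.

Definition inner (n : nat) (x y : 'cV[R]_n) : R := (x^T *m y) 0 0.
Definition enorm (n : nat) (x : 'cV[R]_n) : R := Num.sqrt (inner x x).

Definition prodP (L : nat) (nP : 'I_L -> nat) := forall mu : 'I_L, 'cV[R]_(nP mu).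

Definition normP L (nP : 'I_L -> nat) (p : prodP nP) : R :=
  Num.sqrt (\sum_(mu < L) enorm (p mu) ^+ 2).

Definition upd L (nP : 'I_L -> nat) (p : prodP nP) (mu : 'I_L)
    (q : 'cV[R]_(nP mu)) : prodP nP :=
  fun i => match mu =P i with
           | ReflectT e => eq_rect mu (fun k => 'cV[R]_(nP k)) q i e
           | ReflectF _ => p i
           end.

Arguments upd {L nP} p mu q.
Definition multilinear L (nP : 'I_L -> nat) N (U : prodP nP -> 'cV[R]_N) :=
  forall (p : prodP nP) (mu : 'I_L) (a : R) (q1 q2 : 'cV[R]_(nP mu)),
    U (upd p mu (a *: q1 + q2)) = a *: U (upd p mu q1) + U (upd p mu q2).

(* matrix of the linear map W_{mu,p^[mu]} : P_mu -> V, q |-> U(p with q at mu)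
   (columns = images of the standard (orthonormal) basis vectors) *)
Definition Wmx L (nP : 'I_L -> nat) N (U : prodP nP -> 'cV[R]_N)
    (p : prodP nP) (mu : 'I_L) : 'M[R]_(N, nP mu) :=
  \matrix_(i < N, j < nP mu) (U (upd p mu (delta_mx j 0))) i 0.

Definition penrose m n (M : 'M[R]_(m, n)) (X : 'M[R]_(n, m)) : Prop :=
  [/\ M *m X *m M = M, X *m M *m X = X, (M *m X)^T = M *m X & (X *m M)^T = X *m M].
Definition mpinv m n (M : 'M[R]_(m, n)) : 'M[R]_(n, m) := xget 0 (penrose M).

Definition fobj N (A : 'M[R]_N) (b v : 'cV[R]_N) : R :=
  (enorm b ^+ 2)^-1 * (2^-1 * inner (A *m v) v - inner b v).

Definition is_gradient n (G : 'cV[R]_n -> R) (x g : 'cV[R]_n) : Prop :=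
  differentiable G x /\ ('d G x : 'cV[R]_n -> R) = (fun h => inner g h).
Definition gradient n (G : 'cV[R]_n -> R) (x : 'cV[R]_n) : 'cV[R]_n :=
  xget 0 (is_gradient G x).

Definition partial_grad L (nP : 'I_L -> nat) (F : prodP nP -> R)
    (q : prodP nP) (mu : 'I_L) : 'cV[R]_(nP mu) :=
  gradient (fun x => F (upd q mu x)) (q mu).

(* p_{k,mu-1} (0-indexed mu): components i < mu from step k+1, others from k *)
Definition pmid L (nP : 'I_L -> nat) (ps : nat -> prodP nP) (k : nat) (mu : 'I_L)
  : prodP nP := fun i => if (i < mu)%N then ps k.+1 i else ps k i.

Definition ALS_seq L (nP : 'I_L -> nat) N (A : 'M[R]_N) (b : 'cV[R]_N)
    (U : prodP nP -> 'cV[R]_N) (ps : nat -> prodP nP) : Prop :=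
  forall (k : nat) (mu : 'I_L),
    let W := Wmx U (pmid ps k mu) mu in
    ps k.+1 mu = mpinv (W^T *m A *m W) *m (W^T *m b).

End Defs.

(* Main.v *)
Require Import Defs.
From HB Require Import structures.
From mathcomp Require Import all_boot all_order all_algebra.
From mathcomp Require Import all_classical all_reals all_analysis.
From mathcomp Require Import ring lra.
Import Order.TTheory GRing.Theory Num.Theory.
Import numFieldNormedType.Exports.
Local Open Scope classical_set_scope.
Local Open Scope ring_scope.


Notation updm p mu q := (@upd _ _ _ p mu q).

Section Upd.
Variables (R : realType) (L : nat) (nP : 'I_L -> nat).

Lemma upd_same (p : prodP R nP) mu q : updm p mu q mu = q.
Proof.
rewrite /upd; case: eqP => [e|]; last by [].
by rewrite (eq_irrelevance e erefl).
Qed.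

Lemma upd_other (p : prodP R nP) mu q i : mu != i -> updm p mu q i = p i.
Proof. by rewrite /upd; case: eqP. Qed.

Lemma prodP_ext (p p' : prodP R nP) : (forall i, p i = p' i) -> p = p'.
Proof. by move=> h; apply: functional_extensionality_dep. Qed.

Lemma upd_id (p : prodP R nP) mu : updm p mu (p mu) = p.
Proof.
apply: prodP_ext => i; case: (eqVneq mu i) => [<-|ne]; first by rewrite upd_same.
by rewrite upd_other.
Qed.

Lemma upd_upd (p : prodP R nP) mu q q' : updm (updm p mu q) mu q' = updm p mu q'.
Proof.
apply: prodP_ext => i; case: (eqVneq mu i) => [<-|ne]; first by rewrite !upd_same.
by rewrite !upd_other.
Qed.

Variables (N : nat) (U : prodP R nP -> 'cV[R]_N).
Hypothesis hU : multilinear U.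

Lemma U_upd0 (p : prodP R nP) (mu : 'I_L) : U (updm p mu 0) = 0.
Proof.
have := hU p mu 1 0 0; rewrite !scale1r addr0 => h.
have := congr1 (fun v => v - U (updm p mu 0)) h; rewrite /= subrr addrK => <-//.
Qed.

Lemma U_updD (p : prodP R nP) (mu : 'I_L) x y : U (updm p mu (x + y)) = U (updm p mu x) + U (updm p mu y).
Proof. by have := hU p mu 1 x y; rewrite !scale1r. Qed.

Lemma U_updZ (p : prodP R nP) (mu : 'I_L) a x : U (updm p mu (a *: x)) = a *: U (updm p mu x).
Proof. by have := hU p mu a x 0; rewrite !addr0 U_upd0 addr0. Qed.

Lemma U_upd_lin (p : prodP R nP) (mu : 'I_L) x : U (updm p mu x) = Wmx U p mu *m x.
Proof.
have -> : x = \sum_(j < nP mu) x j 0 *: delta_mx j 0.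
  apply/matrixP => i k; rewrite (ord1 k) summxE (bigD1 i) //= big1 ?addr0.
    by rewrite !mxE !eqxx mulr1.
  by move=> j /negPf ne; rewrite !mxE eq_sym ne mulr0.
rewrite (big_morph (fun q => U (updm p mu q)) (U_updD p mu) (U_upd0 p mu)).
apply/matrixP => i k; rewrite (ord1 k) summxE mxE.
apply: eq_bigr => j _; rewrite U_updZ !mxE summxE (bigD1 j) //= big1 ?addr0.
  by rewrite !mxE !eqxx mulr1 mulrC.
by move=> l /negPf ne; rewrite !mxE eq_sym ne ?mulr0 ?mul0r.
Qed.

End Upd.

Section Inner.
Variable R : realType.

Lemma innerE n (x y : 'cV[R]_n) : inner x y = \sum_i x i 0 * y i 0.
Proof. by rewrite /inner mxE; apply: eq_bigr => i _; rewrite mxE. Qed.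

Lemma inner_sym n (x y : 'cV[R]_n) : inner x y = inner y x.
Proof. by rewrite !innerE; apply: eq_bigr => i _; rewrite mulrC. Qed.

Lemma innerDl n (x y z : 'cV[R]_n) : inner (x + y) z = inner x z + inner y z.
Proof. by rewrite !innerE -big_split; apply: eq_bigr => i _; rewrite mxE mulrDl. Qed.

Lemma innerNl n (x z : 'cV[R]_n) : inner (- x) z = - inner x z.
Proof. by rewrite !innerE -sumrN; apply: eq_bigr => i _; rewrite mxE mulNr. Qed.

Lemma innerBl n (x y z : 'cV[R]_n) : inner (x - y) z = inner x z - inner y z.
Proof. by rewrite innerDl innerNl. Qed.

Lemma innerZl n a (x z : 'cV[R]_n) : inner (a *: x) z = a * inner x z.
Proof. by rewrite !innerE mulr_sumr; apply: eq_bigr => i _; rewrite mxE mulrA. Qed.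

Lemma innerDr n (x y z : 'cV[R]_n) : inner z (x + y) = inner z x + inner z y.
Proof. by rewrite !(inner_sym _ z) innerDl. Qed.
Lemma innerBr n (x y z : 'cV[R]_n) : inner z (x - y) = inner z x - inner z y.
Proof. by rewrite !(inner_sym _ z) innerBl. Qed.
Lemma innerZr n a (x z : 'cV[R]_n) : inner z (a *: x) = a * inner z x.
Proof. by rewrite !(inner_sym _ z) innerZl. Qed.

Lemma inner_mul {m n} (M : 'M[R]_(m, n)) x y : inner (M *m x) y = inner x (M^T *m y).
Proof. by rewrite /inner trmx_mul mulmxA. Qed.

Lemma inner_ge0 n (x : 'cV[R]_n) : 0 <= inner x x.
Proof. by rewrite innerE sumr_ge0 // => i _; rewrite -expr2 sqr_ge0. Qed.

Lemma inner_eq0 n (x : 'cV[R]_n) : inner x x = 0 -> x = 0.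
Proof.
rewrite innerE => /eqP; rewrite psumr_eq0; last by move=> i _; rewrite -expr2 sqr_ge0.
move=> /allP h; apply/matrixP => i j; rewrite (ord1 j) mxE.
have := h i (mem_index_enum i); rewrite /= -expr2 sqrf_eq0 => /eqP //.
Qed.

Lemma coord_le n (x : 'cV[R]_n) i : `|x i 0| <= Num.sqrt (inner x x).
Proof.
rewrite -sqrtr_sqr ler_sqrt ?inner_ge0 // innerE (bigD1 i) //= -expr2 lerDl.
by rewrite sumr_ge0 // => j _; rewrite -expr2 sqr_ge0.
Qed.

Lemma XXT0 m n (X : 'M[R]_(m, n)) : X *m X^T = 0 -> X = 0.
Proof.
move=> h; apply/matrixP => i j; rewrite mxE.
have : (X *m X^T) i i = 0 by rewrite h mxE.
rewrite mxE => /eqP; rewrite psumr_eq0; last by move=> k _; rewrite mxE -expr2 sqr_ge0.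
move=> /allP/(_ j (mem_index_enum j)); rewrite /= mxE -expr2 sqrf_eq0 => /eqP //.
Qed.

Lemma penrose_fact {m n r} (B : 'M[R]_(m, r)) (C : 'M[R]_(r, n)) :
  row_free C -> row_free B^T -> exists X, penrose (B *m C) X.
Proof.
move=> fC fB.
set G1 := B^T *m B; set G2 := C *m C^T.
have u2 : G2 \in unitmx.
  rewrite -row_free_unit -kermx_eq0; apply/eqP.
  set K := kermx G2.
  have hK : K *m G2 = 0 by rewrite mulmx_ker.
  have : (K *m C) *m (K *m C)^T = 0.
    by rewrite trmx_mul mulmxA -(mulmxA K) -/G2 hK mul0mx.
  by move/XXT0/eqP; rewrite mulmx_free_eq0 // => /eqP.
have u1 : G1 \in unitmx.
  rewrite -row_free_unit -kermx_eq0; apply/eqP.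
  set K := kermx G1.
  have hK : K *m G1 = 0 by rewrite mulmx_ker.
  have : (K *m B^T) *m (K *m B^T)^T = 0.
    by rewrite trmx_mul trmxK mulmxA -(mulmxA K) -/G1 hK mul0mx.
  by move/XXT0/eqP; rewrite mulmx_free_eq0 // => /eqP.
have sG1 : G1^T = G1 by rewrite /G1 trmx_mul trmxK.
have sG2 : G2^T = G2 by rewrite /G2 trmx_mul trmxK.
exists (C^T *m invmx G2 *m invmx G1 *m B^T).
have eMX : B *m C *m (C^T *m invmx G2 *m invmx G1 *m B^T) = B *m invmx G1 *m B^T.
  by rewrite !mulmxA -(mulmxA B C) -/G2 -(mulmxA B G2) mulmxV // mulmx1.
have eXM : (C^T *m invmx G2 *m invmx G1 *m B^T) *m (B *m C) = C^T *m invmx G2 *m C.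
  by rewrite !mulmxA -(mulmxA _ B^T B) -/G1 -(mulmxA _ (invmx G1) G1) mulVmx // mulmx1.
split.
- by rewrite eMX !mulmxA -(mulmxA _ B^T B) -/G1 -(mulmxA _ (invmx G1) G1) mulVmx // mulmx1.
- rewrite eXM !mulmxA -(mulmxA _ C C^T) -/G2 -(mulmxA _ (invmx G2) G2) mulVmx //.
  by rewrite mulmx1.
- by rewrite eMX !trmx_mul trmxK trmx_inv sG1 mulmxA.
- by rewrite eXM !trmx_mul trmxK trmx_inv sG2 mulmxA.
Qed.

Lemma penrose_ex m n (M : 'M[R]_(m, n)) : penrose M (mpinv M).
Proof.
rewrite /mpinv; apply: (xgetPex 0).
have hB : row_free (col_base M)^T by rewrite /row_free mxrank_tr; apply: col_base_full.
by have := penrose_fact _ _ (row_base_free M) hB; rewrite mulmx_base.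
Qed.

End Inner.

Set Implicit Arguments. Unset Strict Implicit.

Section Grad.
Variable R : realType.
Variable n : nat.
Local Notation V := 'cV[R]_n.

Lemma is_diff_coord (x : V) (j : 'I_n) :
  is_diff x (fun y : V => y j 0) (fun y : V => y j 0).
Proof.
have @f : {linear V -> R}.
  by exists (fun N : V => N j 0); do 2![eexists]; do ?[constructor];
     rewrite ?mxE// => ? *; rewrite ?mxE//; move=> ?; rewrite !mxE.
have -> : (fun y : V => y j 0) = f by [].
apply: DiffDef; first exact/linear_differentiable/coord_continuous.
by rewrite diff_lin //; apply: coord_continuous.
Qed.

Lemma is_diff_mulL (f g df dg : V -> R) x :
  is_diff x f df -> is_diff x g dg ->
  is_diff x (fun y => f y * g y) (fun h => f x * dg h + g x * df h).
Proof.
move=> hf hg; have := is_diffM hf hg => h.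
by apply: (is_diff_eq h).
Qed.

Lemma is_diff_addL (f g df dg : V -> R) x :
  is_diff x f df -> is_diff x g dg ->
  is_diff x (fun y => f y + g y) (fun h => df h + dg h).
Proof. by move=> hf hg; have := is_diffD hf hg. Qed.

Lemma is_diff_sclL (f df : V -> R) k x :
  is_diff x f df -> is_diff x (fun y => k * f y) (fun h => k * df h).
Proof. by move=> hf; have := is_diffZ k hf. Qed.

Lemma is_diff_sum_seq (I : Type) (s : seq I) (f df : I -> V -> R) x :
  (forall i, is_diff x (f i) (df i)) ->
  is_diff x (fun y => \sum_(i <- s) f i y) (fun h => \sum_(i <- s) df i h).
Proof.
move=> h; elim: s => [|i s IH].
  have -> : (fun y => \sum_(i <- [::]) f i y) = (fun=> 0) by apply: funext => y; rewrite big_nil.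
  have -> : (fun y => \sum_(i <- [::]) df i y) = (fun=> 0) by apply: funext => y; rewrite big_nil.
  exact: (@is_diff_cst R V R 0 x).
have -> : (fun y => \sum_(j <- i :: s) f j y) = (fun y => f i y + \sum_(j <- s) f j y).
  by apply: funext => y; rewrite big_cons.
have -> : (fun y => \sum_(j <- i :: s) df j y) = (fun y => df i y + \sum_(j <- s) df j y).
  by apply: funext => y; rewrite big_cons.
exact: is_diff_addL.
Qed.

Lemma is_diff_sum (I : finType) (f df : I -> V -> R) x :
  (forall i, is_diff x (f i) (df i)) ->
  is_diff x (fun y => \sum_i f i y) (fun h => \sum_i df i h).
Proof. exact: is_diff_sum_seq. Qed.

Lemma is_diff_lincoord {m} (M : 'M[R]_(m, n)) i x :
  is_diff x (fun y : V => (M *m y) i 0) (fun h : V => (M *m h) i 0).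
Proof.
have e : (fun y : V => (M *m y) i 0) = (fun y => \sum_j M i j * y j 0).
  by apply: funext => y; rewrite mxE.
rewrite e; apply: is_diff_sum => j; apply: is_diff_sclL; exact: is_diff_coord.
Qed.

Lemma is_diff_inner (x : V) (M : 'M[R]_n) :
  is_diff x (fun y => inner (M *m y) y) (fun h => inner (M *m x) h + inner (M^T *m x) h).
Proof.
have e : (fun y => inner (M *m y) y) = (fun y => \sum_i (M *m y) i 0 * y i 0).
  by apply: funext => y; rewrite innerE.
rewrite e.
have h := is_diff_sum (fun i => is_diff_mulL (is_diff_lincoord M i x) (is_diff_coord x i)).
apply: (is_diff_eq h); apply: funext => h' /=.
by rewrite (@inner_mul _ _ _ M^T) trmxK !innerE -big_split.
Qed.

Lemma is_gradient_quad (M : 'M[R]_n) (beta : V) (x : V) c :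
  M^T = M ->
  is_gradient (fun y => c * (2^-1 * inner (M *m y) y - inner beta y)) x
    (c *: (M *m x - beta)).
Proof.
move=> sM.
have h1 := is_diff_inner x M.
have h2 : is_diff x (fun y => inner beta y) (fun h => inner beta h).
  have e : (fun y => inner beta y) = (fun y => \sum_i beta i 0 * y i 0).
    by apply: funext => y; rewrite innerE.
  rewrite e; apply: is_diff_sum => i; apply: is_diff_sclL; exact: is_diff_coord.
have h3 := is_diffN h2.
have h4 := is_diffD (is_diffZ (2^-1) h1) h3.
have h5 := is_diffZ c h4.
split; first by apply: ex_diff; exact: h5.
rewrite (@diff_val _ _ _ _ _ _ _ h5) sM; apply: funext => h /=.
set a := inner (M *m x) h.
have -> : (c *: (2^-1 *: (fun h : 'cV_n => inner (M *m x) h + inner (M *m x) h) -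
   [eta inner beta])) h = c * (2^-1 * (a + a) - inner beta h) by [].
rewrite innerZl innerBl; congr (_ * (_ - _)).
by rewrite -mulr2n -[a *+ 2]mulr_natl mulrA mulVf ?mul1r // pnatr_eq0.
Qed.

Lemma is_gradient_uniq (G : V -> R) x g1 g2 :
  is_gradient G x g1 -> is_gradient G x g2 -> g1 = g2.
Proof.
move=> [_ e1] [_ e2]; rewrite e1 in e2.
have := congr1 (fun f => f (g1 - g2)) e2 => /= /eqP.
rewrite -subr_eq0 -innerBl => /eqP /inner_eq0 /eqP.
by rewrite subr_eq0 => /eqP.
Qed.

Lemma gradient_eq (G : V -> R) x g : is_gradient G x g -> gradient G x = g.
Proof.
move=> hg; apply: (is_gradient_uniq _ hg); rewrite /gradient.
by apply: (xgetPex 0); exists g.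
Qed.

End Grad.

Unset Implicit Arguments. Set Strict Implicit.

Section ALS.
Variable R : realType.
Variables (N n : nat) (A : 'M[R]_N) (b : 'cV[R]_N) (W : 'M[R]_(N, n)).
Local Notation M := (W^T *m A *m W).
Local Notation beta := (W^T *m b).
Local Notation c := (enorm b ^+ 2).

Lemma M_quad u : inner (M *m u) u = inner (A *m (W *m u)) (W *m u).
Proof. by rewrite -!mulmxA [LHS]inner_mul trmxK. Qed.

Lemma fobj_W x : fobj A b (W *m x) = c^-1 * (2^-1 * inner (M *m x) x - inner beta x).
Proof.
rewrite /fobj; congr (_ * (_ * _ - _)).
  by rewrite M_quad.
by rewrite [RHS]inner_mul trmxK inner_sym.
Qed.

Lemma M_sym : A^T = A -> M^T = M.
Proof. by move=> sA; rewrite !trmx_mul trmxK sA mulmxA. Qed.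

Lemma A_psd : (forall v : 'cV[R]_N, v != 0 -> 0 < inner (A *m v) v) ->
  forall v, 0 <= inner (A *m v) v.
Proof.
move=> pA v; case: (eqVneq v 0) => [->|/pA /ltW //].
by rewrite mulmx0 /inner mulmx0 mxE.
Qed.


Lemma mx0_cols m (Z : 'M[R]_(m, n)) : (forall v : 'cV[R]_n, Z *m v = 0) -> Z = 0.
Proof.
move=> h; apply/matrixP => i j.
have := congr1 (fun w : 'cV[R]_m => w i 0) (h (delta_mx j 0)); rewrite !mxE => <-.
rewrite (bigD1 j) //= big1 ?addr0; first by rewrite !mxE !eqxx mulr1.
by move=> k /negPf ne; rewrite !mxE ne mulr0.
Qed.

Lemma als_range : A^T = A -> (forall v : 'cV[R]_N, v != 0 -> 0 < inner (A *m v) v) ->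
  M *m (mpinv M *m beta) = beta.
Proof.
move=> sA pA.
have [h1 _ h3 _] := @penrose_ex R _ _ (W^T *m A *m W).
set X := mpinv _ in h1 h3 *.
set Q : 'M[R]_n := 1%:M - M *m X.
have sQ : Q^T = Q by rewrite /Q linearB /= trmx1 h3.
have QM : Q *m M = 0 by rewrite /Q mulmxBl mul1mx h1 subrr.
have MQ : M *m Q = 0.
  by apply: trmx_inj; rewrite trmx_mul sQ (M_sym sA) QM trmx0.
have WQ : W *m Q = 0.
  apply: mx0_cols => v; apply/eqP/negPn/negP => /pA.
  rewrite -mulmxA -M_quad mulmxA MQ mul0mx innerE big1 ?ltxx // => i _.
  by rewrite mxE mul0r.
have QW : Q *m W^T = 0 by rewrite -[Q]sQ -trmx_mul WQ trmx0.
have : Q *m beta = 0 by rewrite mulmxA QW mul0mx.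
rewrite /Q mulmxBl mul1mx => /eqP; rewrite subr_eq0 => /eqP e.
by rewrite mulmxA -e.
Qed.

Lemma decrease x xs : M^T = M -> M *m xs = beta ->
  fobj A b (W *m x) - fobj A b (W *m xs) = c^-1 * (2^-1 * inner (M *m (x - xs)) (x - xs)).
Proof.
move=> sM hM; rewrite !fobj_W -mulrBr; congr (_ * _).
rewrite mulmxBr hM !innerBl !innerBr (@inner_mul _ _ _ (W^T *m A *m W) x xs) sM hM.
rewrite (inner_sym _ _ x beta).
by field.
Qed.

End ALS.

Section CS.
Variable R : realType.

Lemma quad_entry_bound n (M : 'M[R]_n) u :
  inner (M *m u) u <= (\sum_i \sum_j `|M i j|) * inner u u.
Proof.
rewrite innerE mulr_suml; apply: ler_sum => i _; rewrite mxE mulr_suml.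
apply: le_trans (ler_norm _) _; apply: le_trans (ler_norm_sum _ _ _) _.
rewrite mulr_suml; apply: ler_sum => j _; rewrite !normrM.
rewrite -mulrA ler_wpM2l //.
have hi := coord_le _ _ u i; have hj := coord_le _ _ u j.
have s0 : 0 <= Num.sqrt (inner u u) by apply: sqrtr_ge0.
rewrite -[inner u u](@sqr_sqrtr _ (inner u u)) ?inner_ge0 // expr2.
by apply: ler_pM.
Qed.

Lemma cs_bound n (M : 'M[R]_n) (K : R) d : M^T = M -> 0 < K ->
  (forall u, 0 <= inner (M *m u) u) ->
  (forall u, inner (M *m u) u <= K * inner u u) ->
  inner (M *m d) (M *m d) <= K * inner (M *m d) d.
Proof.
move=> sM K0 psd bnd.
set u := M *m d.
have := psd (u - K *: d).
rewrite mulmxBr -scalemxAr -/u innerBl !innerBr !innerZl !innerZr.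
rewrite (@inner_mul _ _ _ M u d) sM -/u.
have hb := bnd u.
set c0 := inner (M *m u) u in hb *; set b0 := inner u u in hb *.
rewrite (inner_sym _ _ u d); set a := inner d u.

move=> h; nra.
Qed.

End CS.



Definition asum {R : realType} {n} (x : 'cV[R]_n) : R := \sum_j `|x j 0|.

Lemma asum_ge0 {R : realType} n (x : 'cV[R]_n) : 0 <= asum x.
Proof. by rewrite /asum sumr_ge0. Qed.

Lemma asum_le {R : realType} n (x : 'cV[R]_n) : asum x <= n%:R * Num.sqrt (inner x x).
Proof.
rewrite /asum; apply: le_trans (_ : \sum_(j < n) Num.sqrt (inner x x) <= _).
  by apply: ler_sum => j _; apply: coord_le.
by rewrite sumr_const card_ord mulr_natl.
Qed.

Lemma asum_delta {R : realType} n (j : 'I_n) : asum (delta_mx j 0 : 'cV[R]_n) = 1.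
Proof.
rewrite /asum (bigD1 j) //= big1 ?addr0; first by rewrite mxE !eqxx normr1.
by move=> k /negPf ne; rewrite mxE ne normr0.
Qed.

Section MLB.
Variables (R : realType) (L : nat) (nP : 'I_L -> nat).
Variables (N : nat) (U : prodP R nP -> 'cV[R]_N).
Hypothesis hU : multilinear U.

Definition merge (n : nat) (p p0 : prodP R nP) : prodP R nP :=
  fun i => if (i < n)%N then p i else p0 i.

Lemma U_self (q : prodP R nP) mu : U q = Wmx U q mu *m q mu.
Proof. by rewrite -U_upd_lin // upd_id. Qed.

Lemma ml_bound_n (n : nat) : forall p0 : prodP R nP, exists K : R, 0 <= K /\
  forall p r, `|U (merge n p p0) r 0| <= K * \prod_(i : 'I_L | (i < n)%N) (1 + asum (p i)).
Proof.
elim: n => [|n IH] p0.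
  exists (\sum_r `|U p0 r 0|); split; first by rewrite sumr_ge0.
  move=> p r; have -> : \prod_(i : 'I_L | (i < 0)%N) (1 + asum (p i)) = 1 by rewrite big_pred0.
  rewrite mulr1.
  have -> : merge 0 p p0 = p0 by apply: prodP_ext.
  by rewrite (bigD1 r) //= lerDl sumr_ge0.
case: (ltnP n L) => [hn|hn]; last first.
  have [K [K0 hK]] := IH p0; exists K; split => // p r.
  have -> : merge n.+1 p p0 = merge n p p0.
    by apply: prodP_ext => i; rewrite /merge (leq_trans (ltn_ord i) hn) ltnS (leq_trans (ltnW (ltn_ord i)) hn).
  rewrite (eq_bigl (fun i : 'I_L => (i < n)%N)) ?hK // => i.
  by rewrite ltnS (leq_trans (ltnW (ltn_ord i)) hn) (leq_trans (ltn_ord i) hn).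
set i0 : 'I_L := Ordinal hn.
have [Kf hKf] := choice (fun j : 'I_(nP i0) => IH (updm p0 i0 (delta_mx j 0))).
exists (\sum_j Kf j); split; first by rewrite sumr_ge0 // => j _; case: (hKf j).
move=> p r.
set q := merge n.+1 p p0.
have qi0 : q i0 = p i0 by rewrite /q /merge ltnSn.
have eupd j : updm q i0 (delta_mx j 0) = merge n p (updm p0 i0 (delta_mx j 0)).
  apply: prodP_ext => i; rewrite /merge; case: (eqVneq i0 i) => [<-|ne].
    by rewrite !upd_same ltnn.
  rewrite !upd_other // /q /merge ltnS leq_eqVlt.
  have -> : (nat_of_ord i == n) = false.
    by apply/negbTE; apply: contra ne => /eqP e; apply/eqP/val_inj.
  by [].
rewrite (U_self q i0) qi0 mxE.
apply: le_trans (ler_norm_sum _ _ _) _.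
have split_prod : \prod_(i : 'I_L | (i < n.+1)%N) (1 + asum (p i)) =
    (1 + asum (p i0)) * \prod_(i : 'I_L | (i < n)%N) (1 + asum (p i)).
  rewrite (bigD1 i0) /=; last by rewrite ltnSn.
  congr (_ * _); apply: eq_bigl => i; rewrite ltnS leq_eqVlt.
  case: (eqVneq i i0) => [->|ne] /=; first by rewrite ltnn eqxx.
  have -> : (nat_of_ord i == n) = false.
    by apply/negbTE; apply: contra ne => /eqP e; apply/eqP/val_inj.
  by rewrite andbT.
rewrite split_prod.
set P := \prod_(i : 'I_L | (i < n)%N) (1 + asum (p i)).
have P0 : 0 <= P by rewrite prodr_ge0 // => i _; rewrite addr_ge0 ?asum_ge0.
apply: le_trans (_ : \sum_j Kf j * P * `|p i0 j 0| <= _).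
  apply: ler_sum => j _; rewrite normrM ler_wpM2r // mxE.
  by have [_ h] := hKf j; rewrite eupd; apply: h.
rewrite mulr_suml; apply: ler_sum => j _.
have [Kj0 _] := hKf j.
rewrite -mulrA ler_wpM2l // mulrC ler_wpM2r //.
have : `|p i0 j 0| <= asum (p i0).
  by rewrite /asum (bigD1 j) //= lerDl sumr_ge0.
lra.
Qed.

Lemma ml_bound : exists K : R, 0 <= K /\
  forall p r, `|U p r 0| <= K * \prod_i (1 + asum (p i)).
Proof.
have [K [K0 hK]] := ml_bound_n L (fun i => 0).
exists K; split => // p r.
have := hK p r.
have -> : merge L p (fun i => 0) = p by apply: prodP_ext => i; rewrite /merge ltn_ord.
have e : \prod_(i : 'I_L | (i < L)%N) (1 + asum (p i)) = \prod_i (1 + asum (p i)) by apply: eq_bigl => i; rewrite ltn_ord.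
by rewrite e.
Qed.

Lemma ml_bound_S : exists K : R, 0 <= K /\ forall S p r, 0 <= S ->
  (forall i, asum (p i) <= S) -> `|U p r 0| <= K * (1 + S) ^+ L.
Proof.
have [K [K0 hK]] := ml_bound; exists K; split => // S p r S0 hS.
apply: le_trans (hK p r) _; apply: ler_wpM2l => //.
have -> : (1 + S) ^+ L = \prod_(i < L) (1 + S) by rewrite prodr_const card_ord.
apply: ler_prod => i _; rewrite addr_ge0 ?asum_ge0 //= lerD2l; exact: hS.
Qed.

End MLB.

Section Ana.
Variable R : realType.

Lemma tail0 (h : nat -> R) (lb : R) : (forall k, h k.+1 <= h k) -> (forall k, lb <= h k) ->
  (fun k => h k - h k.+1) @ \oo --> (0 : R).
Proof.
move=> dec hlb.
have hom : {homo h : n m / (n <= m)%N >-> (m <= n)%R}.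
  move=> n m; elim: m => [|m IH]; first by rewrite leqn0 => /eqP ->.
  rewrite leq_eqVlt => /orP [/eqP -> //| ]; rewrite ltnS => /IH.
  by move/(le_trans (dec m)).
have hl : has_lbound (range h) by exists lb => _ [k _ <-].
have c1 := nonincreasing_cvgn hom hl.
have c2 : (fun k => h k.+1) @ \oo --> inf (range h).
  by have := c1; rewrite -cvg_shiftS.
have := cvgB c1 c2; rewrite subrr; exact.
Qed.

Lemma squeeze_sqrt (e dl : nat -> R) : (forall k, 0 <= e k) -> (forall k, e k ^+ 2 <= dl k) ->
  dl @ \oo --> (0 : R) -> e @ \oo --> (0 : R).
Proof.
move=> e0 ed dl0.
have s0 : (fun k => Num.sqrt (dl k)) @ \oo --> (0 : R).
  rewrite -sqrtr0; apply: continuous_cvg => //; exact: sqrt_continuous.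
apply: (squeeze_cvgr _ (cvg_cst 0) s0); near=> k; rewrite e0 /=.
by rewrite -(ger0_norm (e0 k)) -sqrtr_sqr ler_sqrt // ?(le_trans _ (ed k)) ?sqr_ge0 // ed.
Unshelve. all: by end_near.
Qed.

End Ana.

Section Main.
Variables (R : realType) (N L : nat) (nP : 'I_L -> nat) (A : 'M[R]_N) (b : 'cV[R]_N)
  (U : prodP R nP -> 'cV[R]_N) (ps : nat -> prodP R nP).
Hypotheses (sA : A^T = A) (pA : forall v : 'cV[R]_N, v != 0 -> 0 < inner (A *m v) v)
  (hb : b != 0) (hU : multilinear U) (hALS : ALS_seq A b U ps).

Local Notation c := (enorm b ^+ 2).
Local Notation F := (fun p => fobj A b (U p)).
Local Notation Wk k mu := (Wmx U (pmid ps k mu) mu).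
Local Notation Mk k mu := ((Wk k mu)^T *m A *m Wk k mu).
Local Notation Dl k mu := (ps k mu - ps k.+1 mu).

Definition Q k n : prodP R nP := fun i => if (i < n)%N then ps k.+1 i else ps k i.

Lemma c_gt0 : 0 < c.
Proof.
rewrite /enorm sqr_sqrtr ?inner_ge0 // lt0r inner_ge0 andbT.
by apply: contra hb => /eqP /inner_eq0 ->.
Qed.

Lemma hM k mu : Mk k mu *m ps k.+1 mu = (Wk k mu)^T *m b.
Proof. by rewrite (hALS k mu) /=; apply: als_range. Qed.

Lemma grad_eq k mu : partial_grad F (pmid ps k mu) mu = c^-1 *: (Mk k mu *m Dl k mu).
Proof.
rewrite /partial_grad.
have -> : (fun x => fobj A b (U (updm (pmid ps k mu) mu x))) =
   (fun y => c^-1 * (2^-1 * inner (Mk k mu *m y) y - inner ((Wk k mu)^T *m b) y)).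
  by apply: funext => y; rewrite U_upd_lin // fobj_W.
have -> : pmid ps k mu mu = ps k mu by rewrite /pmid ltnn.
rewrite mulmxBr hM; apply: gradient_eq; apply: is_gradient_quad; exact: M_sym.
Qed.

Lemma Q_succ k (mu : 'I_L) : Q k mu.+1 = updm (Q k mu) mu (ps k.+1 mu).
Proof.
apply: prodP_ext => i; case: (eqVneq mu i) => [<-|ne].
  by rewrite upd_same /Q ltnSn.
rewrite upd_other // /Q ltnS leq_eqVlt.
have -> : (nat_of_ord i == mu) = false.
  by apply/negbTE; apply: contra ne => /eqP e; apply/eqP/val_inj.
by [].
Qed.

Lemma F_step k (mu : 'I_L) :
  F (Q k mu) - F (Q k mu.+1) = c^-1 * (2^-1 * inner (Mk k mu *m Dl k mu) (Dl k mu)).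
Proof.
rewrite Q_succ /= (@U_self _ _ _ _ _ hU (Q k mu) mu) U_upd_lin //.
have e : Q k mu = pmid ps k mu by [].
rewrite e; have -> : pmid ps k mu mu = ps k mu by rewrite /pmid ltnn.
apply: decrease; first exact: M_sym.
exact: hM.
Qed.

Lemma Mk_psd k mu u : 0 <= inner (Mk k mu *m u) u.
Proof. by rewrite M_quad; apply: A_psd. Qed.

Lemma F_step_ge0 k (mu : 'I_L) : 0 <= F (Q k mu) - F (Q k mu.+1).
Proof.
rewrite F_step; apply: mulr_ge0; first by rewrite invr_ge0 ltW ?c_gt0.
by apply: mulr_ge0; [rewrite invr_ge0 | exact: Mk_psd].
Qed.

Lemma Q0 k : Q k 0 = ps k. Proof. by apply: prodP_ext. Qed.
Lemma QL k : Q k L = ps k.+1.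
Proof. by apply: prodP_ext => i; rewrite /Q ltn_ord. Qed.

Lemma sum_steps k : \sum_(mu < L) (F (Q k mu) - F (Q k mu.+1)) = F (ps k) - F (ps k.+1).
Proof.
rewrite -(big_mkord xpredT (fun n => F (Q k n) - F (Q k n.+1))).
rewrite (telescope_sumr_eq (fun n => - F (Q k n))) // ?Q0 ?QL.
  by rewrite opprK addrC.
by move=> n _; rewrite opprK addrC.
Qed.

Lemma step_le k (mu : 'I_L) : F (Q k mu) - F (Q k mu.+1) <= F (ps k) - F (ps k.+1).
Proof.
rewrite -sum_steps (bigD1 mu) //= lerDl sumr_ge0 // => i _.
exact: F_step_ge0.
Qed.

Lemma F_dec k : F (ps k.+1) <= F (ps k).
Proof.
rewrite -subr_ge0 -sum_steps.
by rewrite sumr_ge0 // => i _; apply: F_step_ge0.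
Qed.

Variable C : R.
Hypothesis hC : forall k, normP (ps k) <= C.

Lemma C_ge0 : 0 <= C.
Proof. by apply: le_trans (hC 0); rewrite /normP sqrtr_ge0. Qed.

Lemma enorm_ge0 n (x : 'cV[R]_n) : 0 <= enorm x.
Proof. by rewrite /enorm sqrtr_ge0. Qed.

Lemma enorm_le_normP (p : prodP R nP) i : enorm (p i) <= normP p.
Proof.
rewrite /normP -(ger0_norm (enorm_ge0 _ (p i))) -sqrtr_sqr ler_sqrt.
  by rewrite (bigD1 i) //= lerDl sumr_ge0 // => j _; rewrite sqr_ge0.
by rewrite sumr_ge0 // => j _; rewrite sqr_ge0.
Qed.

Definition Ntot : R := \sum_i (nP i)%:R.

Lemma asum_ps k i : asum (ps k i) <= Ntot * C.
Proof.
apply: le_trans (asum_le _ (ps k i)) _.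
have h1 : (nP i)%:R <= Ntot by rewrite /Ntot (bigD1 i) //= lerDl sumr_ge0.
have h2 : Num.sqrt (inner (ps k i) (ps k i)) <= C.
  exact: le_trans (enorm_le_normP _ i) (hC k).
have h3 : 0 <= Num.sqrt (inner (ps k i) (ps k i)) by apply: sqrtr_ge0.
by apply: ler_pM.
Qed.

Definition S : R := 1 + Ntot * C.

Lemma S_ge0 : 0 <= S.
Proof. by rewrite addr_ge0 // mulr_ge0 ?C_ge0 // /Ntot sumr_ge0. Qed.

Lemma asum_upd k mu j i : asum ((updm (pmid ps k mu) mu (delta_mx j 0)) i) <= S.
Proof.
have h0 : 0 <= Ntot * C by rewrite mulr_ge0 ?C_ge0 // /Ntot sumr_ge0.
case: (eqVneq mu i) => [<-|ne]; first by rewrite upd_same asum_delta lerDl.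
rewrite upd_other // /pmid; case: ifP => _; apply: le_trans (asum_ps _ _) _; by rewrite lerDr.
Qed.

Lemma bounds_U : exists BU, 0 <= BU /\ (forall k mu r j, `|Wk k mu r j| <= BU) /\
  (forall k r, `|U (ps k) r 0| <= BU).
Proof.
have [K0 [K00 hK]] := @ml_bound_S _ _ _ _ _ hU.
exists (K0 * (1 + S) ^+ L); split; first by rewrite mulr_ge0 // exprn_ge0 // addr_ge0 ?S_ge0.
split.
  move=> k mu r j; rewrite mxE; apply: hK; first exact: S_ge0.
  by move=> i; apply: asum_upd.
move=> k r; apply: hK; first exact: S_ge0.
by move=> i; apply: le_trans (asum_ps _ _) _; rewrite lerDr.
Qed.

Definition SA : R := \sum_s \sum_r `|A r s|.

Lemma SA_ge0 : 0 <= SA.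
Proof. by rewrite /SA !sumr_ge0 // => s _; rewrite sumr_ge0. Qed.

Lemma Mk_entry BU k mu i j : 0 <= BU -> (forall r j, `|Wk k mu r j| <= BU) ->
  `|Mk k mu i j| <= BU ^+ 2 * SA.
Proof.
move=> BU0 hW; rewrite mxE; apply: le_trans (ler_norm_sum _ _ _) _.
rewrite /SA mulr_sumr; apply: ler_sum => s _; rewrite normrM.
rewrite (_ : BU ^+ 2 * \sum_r `|A r s| = (BU * \sum_r `|A r s|) * BU); last first.
  by rewrite expr2; ring.
apply: ler_pM => //.
rewrite mxE; apply: le_trans (ler_norm_sum _ _ _) _.
rewrite mulr_sumr; apply: ler_sum => r _; rewrite normrM mxE.
by apply: ler_wpM2r.
Qed.

Lemma Mk_sum BU k mu : 0 <= BU -> (forall r j, `|Wk k mu r j| <= BU) ->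
  \sum_i \sum_j `|Mk k mu i j| <= Ntot ^+ 2 * (BU ^+ 2 * SA).
Proof.
move=> BU0 hW.
apply: le_trans (_ : \sum_(i < nP mu) \sum_(j < nP mu) (BU ^+ 2 * SA) <= _).
  by apply: ler_sum => i _; apply: ler_sum => j _; apply: Mk_entry.
rewrite !sumr_const !card_ord -mulrnA -mulr_natl natrM.
have X0 : 0 <= BU ^+ 2 * SA by rewrite mulr_ge0 ?SA_ge0 // sqr_ge0.
apply: ler_wpM2r => //.
have h1 : (nP mu)%:R <= Ntot by rewrite /Ntot (bigD1 mu) //= lerDl sumr_ge0.
by rewrite expr2; apply: ler_pM.
Qed.

Theorem main_sec :
  (fun k => \big[Num.max/0]_(mu < L)
      enorm (partial_grad (fun p => fobj A b (U p)) (pmid ps k mu) mu))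
    @ \oo --> (0 : R).
Proof.
have [BU [BU0 [hW hUps]]] := bounds_U.
set Kb := 1 + Ntot ^+ 2 * (BU ^+ 2 * SA).
have Kb0 : 0 < Kb.
  rewrite /Kb ltr_pwDl // mulr_ge0 ?sqr_ge0 // mulr_ge0 ?sqr_ge0 ?SA_ge0 //.
have c0 := c_gt0.
set ci := c^-1.
have ci0 : 0 < ci by rewrite invr_gt0.
have lb k : - (ci * ((\sum_r `|b r 0|) * BU)) <= F (ps k).
  have h1 : 0 <= 2^-1 * inner (A *m U (ps k)) (U (ps k)).
    by rewrite mulr_ge0 ?invr_ge0 // A_psd.
  have h2 : inner b (U (ps k)) <= (\sum_r `|b r 0|) * BU.
    rewrite innerE mulr_suml.
    apply: le_trans (ler_norm _) _; apply: le_trans (ler_norm_sum _ _ _) _.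
    by apply: ler_sum => r _; rewrite normrM ler_wpM2l.
  have key : - ((\sum_r `|b r 0|) * BU) <=
      2^-1 * inner (A *m U (ps k)) (U (ps k)) - inner b (U (ps k)) by lra.
  rewrite /fobj -/ci.
  apply: le_trans (_ : ci * (- ((\sum_r `|b r 0|) * BU)) <= _); first by rewrite mulrN.
  by apply: ler_wpM2l; [exact: ltW | exact: key].
have t0 := @tail0 _ (fun k => fobj A b (U (ps k))) _ F_dec lb.
set dl := fun k => (2 * Kb * ci) * (F (ps k) - F (ps k.+1)).
have dl0 : dl @ \oo --> (0 : R).
  by rewrite /dl; have := @cvgMl_tmp _ _ _ _ _ (2 * Kb * ci) _ t0; rewrite mulr0; apply.
have dlge0 k : 0 <= dl k.
  by rewrite /dl mulr_ge0 ?subr_ge0 ?F_dec // !mulr_ge0 ?ltW.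
have ebound k (mu : 'I_L) :
    0 <= enorm (partial_grad (fun p => fobj A b (U p)) (pmid ps k mu) mu) /\
    enorm (partial_grad (fun p => fobj A b (U p)) (pmid ps k mu) mu) ^+ 2 <= dl k.
  split; first exact: enorm_ge0.
  rewrite grad_eq /enorm sqr_sqrtr ?inner_ge0 // innerZl innerZr -/ci.
  set v := Mk k mu *m Dl k mu.
  have bnd u : inner (Mk k mu *m u) u <= Kb * inner u u.
    apply: le_trans (quad_entry_bound _ _ _ _) _; apply: ler_wpM2r; first exact: inner_ge0.
    apply: le_trans (Mk_sum BU k mu BU0 (hW k mu)) _; rewrite /Kb; lra.
  have sM : (Mk k mu)^T = Mk k mu by apply: M_sym.
  have cs := @cs_bound _ _ (Mk k mu) Kb (Dl k mu) sM Kb0 (Mk_psd k mu) bnd.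
  set X := inner (Mk k mu *m Dl k mu) (Dl k mu) in cs.
  set D := F (Q k mu) - F (Q k mu.+1).
  have eD : D = ci * (2^-1 * X) by rewrite /D F_step.
  have enb : enorm b != 0.
    by move: c0; apply: contraTneq => ->; rewrite expr0n /= ltxx.
  have eX : X = 2 * c * D by rewrite eD /ci; field.
  have hD : D <= F (ps k) - F (ps k.+1) by apply: step_le.
  apply: le_trans (_ : ci * (ci * (Kb * X)) <= _).
    apply: ler_wpM2l; first exact: ltW.
    apply: ler_wpM2l; first exact: ltW.
    exact: cs.
  have -> : ci * (ci * (Kb * X)) = (2 * Kb * ci) * D.
    by rewrite eX /ci; field.
  rewrite /dl; apply: ler_wpM2l => //.
  apply: mulr_ge0; last exact: ltW.
  by apply: mulr_ge0 => //; exact: ltW.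
have both k : 0 <= \big[Num.max/0]_(mu < L) enorm (partial_grad (fun p => fobj A b (U p)) (pmid ps k mu) mu) /\
   (\big[Num.max/0]_(mu < L) enorm (partial_grad (fun p => fobj A b (U p)) (pmid ps k mu) mu)) ^+ 2 <= dl k.
  apply: (big_ind (fun x => 0 <= x /\ x ^+ 2 <= dl k)).
  - by rewrite expr0n /= dlge0.
  - move=> x y [hx1 hx2] [hy1 hy2]; have [xy|xy] := leP x y.
      by [].
    by [].
  - by move=> mu _; have [e1 e2] := ebound k mu; split.
apply: (@squeeze_sqrt _ _ dl _ _ dl0) => k; by case: (both k).
Qed.

End Main.





Theorem mainTheorem11 (R : realType) (d : nat) (m : 'I_d -> nat)
  (L : nat) (hLd : (d <= L)%N) (nP : 'I_L -> nat)
  (A : 'M[R]_(\prod_(nu < d) m nu)) (b : 'cV[R]_(\prod_(nu < d) m nu))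
  (U : prodP _ nP -> 'cV[R]_(\prod_(nu < d) m nu))
  (ps : nat -> prodP _ nP) :
  A^T = A ->
  (forall v : 'cV[R]_(\prod_(nu < d) m nu), v != 0 -> 0 < inner (A *m v) v) ->
  b != 0 ->
  multilinear U ->
  ALS_seq A b U ps ->
  (exists C : R, forall k, normP (ps k) <= C) ->
  (fun k => \big[Num.max/0]_(mu < L)
      enorm (partial_grad (fun p => fobj A b (U p)) (pmid ps k mu) mu))
    @ \oo --> (0 : R).
Proof.
move=> sA pA hb hU hALS [C hC].
exact: (@main_sec R _ L nP A b U ps sA pA hb hU hALS C hC).
Qed.
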